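(* For any two disjoint sets of vertices $V_1,V_2$, the complete oddly bipartite $4$-graph $G^{\mathrm{odd}}(V_1,V_2)$ is $\mathscr C_k^{(4)}$-hom-free for each $k\in\{1,2,3\}$. In particular, $\mathrm{ex}(n,C_L^{(4)})\ge e^{\mathrm{opt}}(n)$ for every $n$ and every $L>4$ with $L\not\equiv0\pmod4$.
   Context: $G^{\mathrm{odd}}(V_1,V_2)$ is the $4$-graph on $V_1\cup V_2$ whose edges are the $4$-subsets meeting $V_1$ in an odd number of vertices. For $\ell>4$, the tight cycle $C_\ell^{(4)}$ has vertices $v_1,\dots,v_\ell$ and edges $\{v_i,\dots,v_{i+3}\}$ (indices mod $\ell$). A homomorphism $F\to G$ maps $V(F)\to V(G)$ sending each edge of $F$ onto an edge of $G$; $G$ is $\mathscr C_k^{(4)}$-hom-free if there is no homomorphism $C_\ell^{(4)}\to G$ for any $\ell>4$ with $\ell\equiv k\pmod 4$. $\mathrm{ex}(n,F)$ is the maximum number of edges of an $n$-vertex $4$-graph with no subgraph isomorphic to $F$. $e^{\mathrm{opt}}(n)=\max_{a+b=n}\big(\binom a3b+a\binom b3\big)$. *)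

(* Defs.v *)
From mathcomp Require Import all_boot.
From mathcomp Require Import boolp.
Set Implicit Arguments. Unset Strict Implicit. Unset Printing Implicit Defensive.

Definition uniform4 (T : finType) (E : {set {set T}}) : bool :=
  [forall e in E, #|e| == 4].

Definition Godd (T : finType) (V1 V2 : {set T}) : {set {set T}} :=
  [set e : {set T} | [&& e \subset V1 :|: V2, #|e| == 4 & odd #|e :&: V1|]].

(* The vertices v_1..v_L of the tight cycle are
   encoded as residues mod L, i.e. f : nat -> T is L-periodic (f i is the image
   of v_{i mod L}); the edge {v_i,...,v_{i+3}} must be mapped ONTO an edge of E. *)
Definition cycle_hom (T : finType) (E : {set {set T}}) (L : nat) (f : nat -> T) : Prop :=
  (forall j, f (j + L) = f j) /\
  (forall i, i < L -> [set f (i + j) | j : 'I_4] \in E).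

Definition hom_free (T : finType) (E : {set {set T}}) (k : nat) : Prop :=
  forall l, 4 < l -> l = k %[mod 4] -> ~ (exists f : nat -> T, cycle_hom E l f).

Definition contains_cycle (T : finType) (E : {set {set T}}) (L : nat) : Prop :=
  exists f : nat -> T, cycle_hom E L f /\
    (forall i j, i < L -> j < L -> f i = f j -> i = j).

Definition ex_cycle (n L : nat) : nat :=
  \max_(E : {set {set 'I_n}} | uniform4 E && `[< ~ contains_cycle E L >]) #|E|.

Definition eopt (n : nat) : nat :=
  \max_(a < n.+1) ('C(a, 3) * (n - a) + a * 'C(n - a, 3)).

(* Main.v *)
Require Import Defs.
From mathcomp Require Import all_boot.
From mathcomp Require Import boolp.

Lemma per (T : Type) (f : nat -> T) l : (forall j, f (j + l) = f j) -> forall i, f i = f (i %% l).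
Proof.
move=> H i; rewrite {1}(divn_eq i l); elim: (i %/ l) => [|q IH]; first by rewrite mul0n add0n.
by rewrite mulSnr addnAC H.
Qed.

Lemma window (T : finType) (V1 V2 : {set T}) l f : 0 < l -> cycle_hom (Godd V1 V2) l f ->
  forall i, odd ((f i \in V1) + (f (i+1) \in V1) + (f (i+2) \in V1) + (f (i+3) \in V1)).
Proof.
move=> l0 [H1 H2] i.
have P := @per T f l H1.
have := H2 (i %% l) (ltn_pmod i l0).
have -> : [set f (i %% l + j) | j : 'I_4] = [set f (i + j) | j : 'I_4].
  by apply: eq_imset => j; rewrite (P (i %% l + j)) (P (i + j)) modnDml.
rewrite inE => /and3P [_ c4 od].
pose g := fun j : 'I_4 => f (i + j).
have ginj : {in 'I_4 &, injective g}.
  by apply/imset_injP; rewrite card_ord.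
have E1 : [set f (i + j) | j : 'I_4] :&: V1 = g @: [set j | g j \in V1].
  apply/setP => y; rewrite inE; apply/andP/imsetP.
    by case=> /imsetP [j _ ->] hj; exists j; rewrite // inE.
  by case=> j; rewrite inE => hj ->; split => //; apply/imsetP; exists j.
move: od; rewrite E1 card_in_imset; last by move=> a b _ _; apply: ginj.
rewrite cardsE -sum1_card big_mkcond /= !big_ord_recl big_ord0 /= /g /=.
rewrite !unfold_in /=.
rewrite addn0 /bump /=.
have q : forall b : bool, (if b then 1 else 0) = b by case.
rewrite !q.
change (odd ((f i \in V1) + ((f (i+1) \in V1) + ((f (i+2) \in V1) + ((f (i+3) \in V1) + 0)))) -> odd ((f i \in V1) + (f (i+1) \in V1) + (f (i+2) \in V1) + (f (i+3) \in V1))).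
by case: (f i \in V1); case: (f (i + 1) \in V1); case: (f (i + 2) \in V1); case: (f (i + 3) \in V1).

Qed.

Lemma part1 (T : finType) (V1 V2 : {set T}) k : 1 <= k <= 3 -> hom_free (Godd V1 V2) k.
Proof.
move=> hk l l4 lk [f hf].
have l0 : 0 < l by apply: leq_trans l4.
have W := @window T V1 V2 l f l0 hf.
case: hf => [H1 H2].
pose b := fun n => nat_of_bool (f n \in V1).
have sh : forall i, b (i + 4) = b i.
  move=> i; have w1 : odd (b i + b (i+1) + b (i+2) + b (i+3)) := W i.
  have := W (i + 1); rewrite -[i + 1 + 1]addnA -[i + 1 + 2]addnA -[i + 1 + 3]addnA => w2.
  have w2' : odd (b (i+1) + b (i+2) + b (i+3) + b (i+4)) := w2.
  move: w1 w2'; rewrite /b.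
  by case: (f i \in V1); case: (f (i + 1) \in V1); case: (f (i + 2) \in V1); case: (f (i + 3) \in V1); case: (f (i + 4) \in V1).
have per4 : forall m i, b (i + 4 * m) = b i.
  elim=> [|m IH] i; first by rewrite muln0 addn0.
  by rewrite mulnS addnA addnAC sh IH.
have hl : forall j, b (j + l) = b j by move=> j; rewrite /b H1.
have kl : l %% 4 = k.
  by rewrite lk modn_small //; case/andP: hk.
have E : forall j, b (j + k) = b j.
  move=> j; rewrite -(per4 (l %/ 4)) -addnA mulnC -kl.
  by rewrite [l %% 4 + _]addnC -divn_eq hl.
have w : odd (b 0 + b 1 + b 2 + b 3) := W 0.
case: k hk {lk kl} E => [|[|[|[|k]]]] //= _ E.
- have e1 : b 1 = b 0 := E 0.
  have e2 : b 2 = b 1 := E 1.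
  have e3 : b 3 = b 2 := E 2.
  move: w e1 e2 e3; rewrite /b.
  by case: (f 0 \in V1); case: (f 1 \in V1); case: (f 2 \in V1); case: (f 3 \in V1).
- have e1 : b 2 = b 0 := E 0.
  have e2 : b 3 = b 1 := E 1.
  move: w e1 e2; rewrite /b.
  by case: (f 0 \in V1); case: (f 1 \in V1); case: (f 2 \in V1); case: (f 3 \in V1).
- have e1 : b 3 = b 0 := E 0.
  have e2 : b 4 = b 1 := E 1.
  have e3 : b 5 = b 2 := E 2.
  have e4 : b 4 = b 0 := sh 0.
  have e5 : b 5 = b 1 := sh 1.
  move: w e1 e2 e3 e4 e5; rewrite /b.
  by case: (f 0 \in V1); case: (f 1 \in V1); case: (f 2 \in V1); case: (f 3 \in V1); case: (f 4 \in V1); case: (f 5 \in V1).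
Qed.

Lemma splitUV {T : finType} {V B C : {set T}} : B \subset V -> C \subset ~: V ->
  (B :|: C) :&: V = B /\ (B :|: C) :&: ~: V = C.
Proof.
move=> /subsetP hB /subsetP hC; split; apply/setP => x; rewrite !inE;
  case xB: (x \in B); case xC: (x \in C); case xV: (x \in V) => //=.
all: first [ by move: (hC x xC); rewrite inE xV | by move: (hB x xB); rewrite xV].
Qed.

Definition D {T : finType} k (A : {set T}) := [set B : {set T} | B \subset A & #|B| == k].

Lemma img_card (T : finType) (V : {set T}) i j :
  #|[set p.1 :|: p.2 | p in setX (D i V) (D j (~: V))]| = 'C(#|V|, i) * 'C(#|~: V|, j).
Proof.
rewrite card_in_imset ?cardsX /D ?cards_draws //.
move=> [b1 c1] [b2 c2]; rewrite !inE /= => /andP [/andP [s1 _] /andP [t1 _]]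
  /andP [/andP [s2 _] /andP [t2 _]] e.
have [h1 h2] := splitUV s1 t1; have [h3 h4] := splitUV s2 t2.
have eb : b1 = b2 by rewrite -h1 e h3.
have ec : c1 = c2 by rewrite -h2 e h4.
by rewrite eb ec.
Qed.

Lemma img_sub {T : finType} {V : {set T}} {i j p} : p \in setX (D i V) (D j (~: V)) ->
  #|(p.1 :|: p.2) :&: V| = i /\ #|p.1 :|: p.2| = i + j.
Proof.
case: p => b c; rewrite !inE /= => /andP [/andP [s1 /eqP c1] /andP [t1 /eqP c2]].
have [h1 h2] := splitUV s1 t1.
by rewrite h1 c1; split => //; rewrite -(cardsID V) h1 setDE h2 c1 c2.
Qed.

Lemma count_godd {T : finType} (V : {set T}) :
  'C(#|V|, 3) * #|~: V| + #|V| * 'C(#|~: V|, 3) <= #|Godd V (~: V)|.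
Proof.
set I1 := [set p.1 :|: p.2 | p in setX (D 3 V) (D 1 (~: V))].
set I2 := [set p.1 :|: p.2 | p in setX (D 1 V) (D 3 (~: V))].
have -> : 'C(#|V|, 3) * #|~: V| + #|V| * 'C(#|~: V|, 3) = #|I1| + #|I2|.
  by rewrite /I1 /I2 !img_card !bin1.
rewrite -cardsUI.
have -> : I1 :&: I2 = set0.
  apply/setP => e; rewrite !inE; apply/negP => /andP [/imsetP [p hp ->] /imsetP [q hq eq]].
  have [a1 _] := img_sub hp; have [a2 _] := img_sub hq.
  by move: a1; rewrite eq a2.
rewrite cards0 addn0; apply: subset_leq_card; apply/subsetP => e.
rewrite !inE setUCr subsetT /= => /orP [] /imsetP [p hp ->];
  have [a1 a2] := img_sub hp; by rewrite a1 a2.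
Qed.

Theorem proposition3p15 :
  (forall (T : finType) (V1 V2 : {set T}), [disjoint V1 & V2] ->
     forall k, 1 <= k <= 3 -> hom_free (Godd V1 V2) k)
  /\
  (forall n L, 4 < L -> L %% 4 != 0 -> eopt n <= ex_cycle n L).
Proof.
split; first by move=> T V1 V2 _ k hk; apply: part1.
move=> n L L4 Lm; rewrite /eopt; apply/bigmax_leqP => a _.
have ha : a <= n by rewrite -ltnS ltn_ord.
pose V := [set widen_ord ha i | i : 'I_a].
have cV : #|V| = a.
  rewrite card_imset ?card_ord //.
  by move=> x y e; apply: val_inj; exact: (congr1 val e).
have cCV : #|~: V| = n - a by rewrite cardsCs setCK card_ord cV.
apply: leq_trans (_ : _ <= #|Godd V (~: V)|) _.
  by have := count_godd V; rewrite cV cCV.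
apply: (leq_bigmax_cond (Godd V (~: V))); apply/andP; split.
  rewrite /uniform4; apply/forallP => e; apply/implyP.
  by rewrite inE => /and3P [_ ? _].
apply/asboolP => - [f [hf _]].
have hk : 1 <= L %% 4 <= 3.
  by rewrite lt0n Lm /= -ltnS ltn_pmod.
apply: (@part1 _ V (~: V) _ hk L L4 _ (ex_intro _ f hf)).
by rewrite modn_mod.
Qed.
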